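(* Let $n\ge 2$, let $\mathbb{F}_q$ be a finite field with $q$ elements, and let $V$ be an $n$-dimensional vector space over $\mathbb{F}_q$. Let $\mathcal{F}$ be the set of complete flags $V_*=(V_0\subset V_1\subset\dots\subset V_n)$ in $V$ with $\dim V_k=k$ for $k\in[0,n]$. Let $\mathcal{H}$ be the $\mathbb{C}$-vector space of functions $\mathcal{F}\times\mathcal{F}\to\mathbb{C}$ constant on the orbits of the diagonal action of $GL(V)$, with multiplication $(f*f')(W_*,V_* )=\sum_{V'_*\in\mathcal{F}}f(W_*,V'_* )f'(V'_*,V_* )$. Define $f_1\in\mathcal{H}$ by: $f_1(W_*,V'_* )=1$ if there exists $g\in[1,n]$ with $W_r=V'_r$ for $r\in[1,g-1]$ and $V'_r\ne W_r\subset V'_{r+1}$ for $r\in[g,n-1]$; and $f_1(W_*,V'_* )=0$ otherwise. For $t\in[0,n]$ let $X_t\subset\mathcal{F}\times\mathcal{F}$ be the set of pairs $(V'_*,V_* )$ for which there exists a sequence $1\le i_1<i_2<\dots<i_{n-t}\le n$ with $V'_r\subset V_{i_r}$ and $V'_r\not\subset V_{i_r-1}$ for all $r\in[1,n-t]$, and let $f_t\in\mathcal{H}$ be the indicator function of $X_t$ (for $t=1$ this coincides with $f_1$ above). Then for every $t\in[1,n-1]$, $$f_1*f_t=(1+q+q^2+\dots+q^{t-1})f_t+q^tf_{t+1}.$$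
   Context: For integers $a,b$, $[a,b]$ denotes the set of integers $c$ with $a\le c\le b$. $GL(V)$ acts on $\mathcal{F}$ by $gV_*=(gV_0\subset gV_1\subset\dots\subset gV_n)$ and on $\mathcal{F}\times\mathcal{F}$ diagonally. *)

(* Defs.v *)
From HB Require Import structures.
From mathcomp Require Import all_boot all_order all_algebra all_field.
Set Implicit Arguments. Unset Strict Implicit. Unset Printing Implicit Defensive.
Import Order.TTheory GRing.Theory Num.Theory.
Local Open Scope ring_scope.

(* V = 'rV[F]_n ; a subspace is represented by its canonical matrix <<A>>%MS,
   so that distinct matrices represent distinct subspaces. *)

Definition is_flagb (F : fieldType) (n : nat)
  (Vs : {ffun 'I_n.+1 -> 'M[F]_n}) : bool :=
  [forall k : 'I_n.+1, (Vs k == <<Vs k>>%MS) && (\rank (Vs k) == k)] &&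
  [forall i : 'I_n.+1, forall j : 'I_n.+1, (i <= j)%N ==> (Vs i <= Vs j)%MS].

Definition flag (F : finFieldType) (n : nat) :=
  {Vs : {ffun 'I_n.+1 -> 'M[F]_n} | is_flagb Vs}.

Definition fsub (F : finFieldType) (n : nat) (Vs : flag F n) (k : nat) : 'M[F]_n :=
  val Vs (inord k).

Definition f1b (F : finFieldType) (n : nat) (W V' : flag F n) : bool :=
  [exists g : 'I_n.+1, (1 <= g)%N &&
    [forall r : 'I_n.+1,
      (((1 <= r) && (r <= g - 1))%N ==> (fsub W r == fsub V' r)%MS) &&
      (((g <= r) && (r <= n - 1))%N ==>
         (~~ (fsub V' r == fsub W r)%MS && (fsub W r <= fsub V' r.+1)%MS))]].

(* membership of (V', V) in X_t ; the sequence i_1 < ... < i_{n-t} is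
   encoded by i : 'I_n.+1 -> 'I_n.+1, only indices r in [1, n-t] matter. *)
Definition Xb (F : finFieldType) (n t : nat) (V' V : flag F n) : bool :=
  [exists i : {ffun 'I_n.+1 -> 'I_n.+1},
    [forall r : 'I_n.+1,
      ((1 <= r) && (r <= n - t))%N ==>
        [&& (1 <= i r)%N,
            ((r < n - t)%N ==> (i r < i (inord r.+1))%N),
            (fsub V' r <= fsub V (i r))%MS &
            ~~ (fsub V' r <= fsub V (i r).-1)%MS]]].

Definition ind (F : finFieldType) (n : nat) (P : flag F n -> flag F n -> bool)
  : flag F n -> flag F n -> algC :=
  fun W V => if P W V then 1 else 0.

Definition f1 (F : finFieldType) (n : nat) := ind (@f1b F n).
Definition ft (F : finFieldType) (n t : nat) := ind (@Xb F n t).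

Definition hconv (F : finFieldType) (n : nat) (f f' : flag F n -> flag F n -> algC)
  (W V : flag F n) : algC :=
  \sum_(V' : flag F n) f W V' * f' V' V.

(* Main.v *)
Require Import Defs.
From HB Require Import structures.
From mathcomp Require Import all_boot all_order all_algebra all_field.
From mathcomp Require Import zify.
Import Order.TTheory GRing.Theory Num.Theory.
Local Open Scope ring_scope.
Set Implicit Arguments. Unset Strict Implicit. Unset Printing Implicit Defensive.

Section Basics.
Variables (F : finFieldType) (n : nat).
Implicit Types (X W V : flag F n).

Lemma inordK' k : (k <= n)%N -> nat_of_ord (inord k : 'I_n.+1) = k.
Proof. by move=> hk; rewrite inordK. Qed.

Lemma fsubE X (k : 'I_n.+1) : fsub X k = val X k.
Proof. by rewrite /fsub inord_val. Qed.

Lemma flag_canon X k : fsub X k = <<fsub X k>>%MS.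
Proof.
rewrite /fsub; case: X => Vs /= /andP[/forallP h _].
by case/andP: (h (inord k)) => /eqP.
Qed.

Lemma flag_rank X k : (k <= n)%N -> \rank (fsub X k) = k.
Proof.
move=> hk; rewrite /fsub; case: X => Vs /= /andP[/forallP h _].
by case/andP: (h (inord k)) => _ /eqP ->; rewrite inordK.
Qed.

Lemma flag_mono X i j : (i <= j)%N -> (j <= n)%N -> (fsub X i <= fsub X j)%MS.
Proof.
move=> hij hj; rewrite /fsub; case: X => Vs /= /andP[_ /forallP h].
move/forallP: (h (inord i)) => /(_ (inord j)) /implyP; apply.
by rewrite !inordK //; lia.
Qed.

Lemma flag_full X : (1%:M <= fsub X n)%MS.
Proof. by apply: submx_full; rewrite /row_full flag_rank. Qed.

Lemma flag_0 X : fsub X 0 = 0.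
Proof. by apply/eqP; rewrite -mxrank_eq0 flag_rank. Qed.

Lemma flag_eq X k (A : 'M[F]_n) : (A == fsub X k)%MS -> <<A>>%MS = fsub X k.
Proof. by move/genmxP => ->; rewrite -flag_canon. Qed.

Lemma pos_ex X m (U : 'M[F]_(m, n)) :
  exists i, (i <= n)%N && (U <= fsub X i)%MS.
Proof. by exists n; rewrite leqnn /= (submx_trans (submx1 U)) ?flag_full. Qed.

Definition pos X m (U : 'M[F]_(m, n)) : nat := ex_minn (pos_ex X U).

Lemma pos_spec X m (U : 'M[F]_(m, n)) :
  (pos X U <= n)%N /\ (U <= fsub X (pos X U))%MS /\
  (forall i, (i <= n)%N -> (U <= fsub X i)%MS -> (pos X U <= i)%N).
Proof.
rewrite /pos; case: ex_minnP => i /andP[h1 h2] h3; split=> //; split=> //.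
by move=> j hj hU; apply: h3; rewrite hj.
Qed.

Lemma pos_leE X m (U : 'M[F]_(m, n)) k :
  (k <= n)%N -> (U <= fsub X k)%MS = (pos X U <= k)%N.
Proof.
move=> hk; have [h1 [h2 h3]] := pos_spec X U.
apply/idP/idP; first exact: h3.
by move=> hp; apply: submx_trans h2 (flag_mono _ hp hk).
Qed.

Lemma pos_le_n X m (U : 'M[F]_(m, n)) : (pos X U <= n)%N.
Proof. by case: (pos_spec X U). Qed.

Lemma pos_adds X m1 m2 (U1 : 'M[F]_(m1, n)) (U2 : 'M[F]_(m2, n)) :
  pos X (U1 + U2)%MS = maxn (pos X U1) (pos X U2).
Proof.
have hm : (maxn (pos X U1) (pos X U2) <= n)%N by rewrite geq_max !pos_le_n.
apply/eqP; rewrite eqn_leq; apply/andP; split.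
  rewrite -pos_leE //.
  by rewrite addsmx_sub !pos_leE ?leq_maxl ?leq_maxr.
have [h0 [h _]] := pos_spec X (U1 + U2)%MS.
rewrite geq_max -(pos_leE _ U1 h0) -(pos_leE _ U2 h0).
by rewrite (submx_trans (addsmxSl _ _) h) (submx_trans (addsmxSr _ _) h).
Qed.

Lemma pos_gen X m (U : 'M[F]_(m, n)) : pos X <<U>>%MS = pos X U.
Proof.
apply/eqP; rewrite eqn_leq -pos_leE ?pos_le_n // -[X in _ && X]pos_leE ?pos_le_n //.
have [_ [h1 _]] := pos_spec X U; have [_ [h2 _]] := pos_spec X <<U>>%MS.
by rewrite genmxE h1 -genmxE h2.
Qed.

Lemma pos_ge1 X Y r : (1 <= r)%N -> (r <= n)%N -> (0 < pos X (fsub Y r))%N.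
Proof.
move=> h1 h2; rewrite lt0n; apply/negP => /eqP h.
have [_ [hs _]] := pos_spec X (fsub Y r).
move: hs; rewrite h flag_0 submx0 -mxrank_eq0 flag_rank //; lia.
Qed.

Definition strict (m : nat) (f : nat -> nat) :=
  forall r, (1 <= r)%N -> (r < m)%N -> (f r < f r.+1)%N.

Lemma Xb_pos t X Y : (t <= n)%N ->
  Xb t X Y <-> strict (n - t) (fun r => pos Y (fsub X r)).
Proof.
move=> ht; split.
  case/existsP => i /forallP H.
  have key : forall r : 'I_n.+1, (1 <= r)%N -> (r <= n - t)%N ->
      pos Y (fsub X r) = i r.
    move=> r h1 h2; have := H r; rewrite h1 h2 /= => /and4P[a _ c d].
    apply/eqP; rewrite eqn_leq -pos_leE ?c ?leq_ord //=.
    have h3 : ((i r).-1 <= n)%N by have := leq_ord (i r); lia.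
    rewrite (pos_leE _ _ h3) -ltnNge in d.
    by move: a d; case: (nat_of_ord (i r)).
  move=> r h1 h2.
  have hr : (r <= n)%N by lia.
  have hr1 : (r.+1 <= n)%N by lia.
  have e1 : pos Y (fsub X r) = i (inord r).
    by have := key (inord r); rewrite inordK //; apply; lia.
  have e2 : pos Y (fsub X r.+1) = i (inord r.+1).
    by have := key (inord r.+1); rewrite inordK //; apply; lia.
  rewrite e1 e2.
  have := H (inord r); rewrite !inordK //.
  have -> : (0 < r <= n - t)%N by apply/andP; split; lia.
  by rewrite h2 => /and4P[_ /= b _ _].
move=> hs; apply/existsP; exists [ffun r : 'I_n.+1 => inord (pos Y (fsub X r))].
apply/forallP => r; apply/implyP => /andP[h1 h2]; rewrite !ffunE.
have hp := pos_le_n Y (fsub X r).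
have hg := @pos_ge1 Y X r h1 (leq_trans h2 (leq_subr _ _)).
rewrite inordK // hg /=; apply/and3P; split.
- apply/implyP => h3.
  have e : nat_of_ord (inord r.+1 : 'I_n.+1) = r.+1 by rewrite inordK //; lia.
  rewrite e inordK ?ltnS ?pos_le_n //; exact: hs.
- by have [_ [h _]] := pos_spec Y (fsub X r).
- have hq : ((pos Y (fsub X r)).-1 <= n)%N by lia.
  have := pos_leE Y (fsub X r) hq => /= ->; lia.
Qed.

End Basics.

Section MxAux.
Variable (F : fieldType).

Lemma sub_rank_eq m1 m2 n (A : 'M[F]_(m1, n)) (B : 'M[F]_(m2, n)) :
  (A <= B)%MS -> (\rank B <= \rank A)%N -> (A == B)%MS.
Proof.
move=> sAB hr; rewrite -(mxrank_leqif_eq sAB).2 eqn_leq hr mxrankS //.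
Qed.

Lemma rank_addv m n (A : 'M[F]_(m, n)) (v : 'rV[F]_n) :
  ~~ (v <= A)%MS -> \rank (A + v)%MS = (\rank A).+1.
Proof.
move=> hv; apply/eqP; rewrite eqn_leq; apply/andP; split.
  apply: leq_trans (mxrank_adds_leqif A v).1 _.
  by rewrite -[X in (_ <= X)%N]addn1 leq_add2l rank_leq_row.
rewrite (ltn_leqif (mxrank_leqif_sup (addsmxSl A v))).
by rewrite addsmx_sub submx_refl.
Qed.

End MxAux.

Section MK.
Variables (F : finFieldType) (n : nat) (W : flag F n).
Local Notation H := (fsub W n.-1).

Lemma fsub_eq (X Y : flag F n) i j :
  (fsub X i == fsub Y j)%MS -> fsub X i = fsub Y j.
Proof. by move/genmxP; rewrite -!flag_canon. Qed.

Definition mkfun (g : nat) (v : 'rV[F]_n) : {ffun 'I_n.+1 -> 'M[F]_n} :=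
  [ffun k : 'I_n.+1 => if (k < g)%N then fsub W k else <<(fsub W k.-1 + v)%MS>>%MS].

Definition mk g v : flag F n := insubd W (mkfun g v).

Lemma mk_flag g v : (1 <= g <= n)%N -> ~~ (v <= H)%MS -> is_flagb (mkfun g v).
Proof.
move=> /andP[g1 gn] hv.
have hvk : forall k, (k <= n.-1)%N -> ~~ (v <= fsub W k)%MS.
  move=> k hk; apply: contra hv => h; apply: submx_trans h (flag_mono _ hk _).
  lia.
apply/andP; split; apply/forallP => k.
  rewrite ffunE; case: ifP => hk.
    by rewrite -flag_canon eqxx flag_rank ?eqxx // -ltnS.
  have k0 : (0 < k)%N by move/negbT: hk; rewrite -leqNgt; lia.
  have := ltn_ord k => kn.
  rewrite genmx_id eqxx /= genmxE rank_addv ?hvk ?flag_rank ?prednK //;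
    rewrite -?subn1; lia.
apply/forallP => j; apply/implyP => hkj; rewrite !ffunE.
have hj := leq_ord j.
case: ifP => hk; case: ifP => hjg.
- exact: flag_mono.
- rewrite genmxE (submx_trans _ (addsmxSl _ _)) //; apply: flag_mono; lia.
- lia.
- rewrite !genmxE addsmxS // flag_mono //; lia.
Qed.

Lemma fsub_mk g v k : (1 <= g <= n)%N -> ~~ (v <= H)%MS -> (k <= n)%N ->
  fsub (mk g v) k = if (k < g)%N then fsub W k else <<(fsub W k.-1 + v)%MS>>%MS.
Proof.
move=> hg hv hk; rewrite /fsub /mk val_insubd mk_flag // ffunE inordK //.
Qed.

Definition sg (g : nat) (V' : flag F n) : bool :=
    [forall r : 'I_n.+1,
      (((1 <= r) && (r <= g - 1))%N ==> (fsub W r == fsub V' r)%MS) &&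
      (((g <= r) && (r <= n - 1))%N ==>
         (~~ (fsub V' r == fsub W r)%MS && (fsub W r <= fsub V' r.+1)%MS))].

Lemma f1bE V' : f1b W V' = [exists g : 'I_n.+1, (1 <= g)%N && sg g V'].
Proof. by []. Qed.

Lemma sgP g V' : sg g V' ->
  (forall r, (1 <= r)%N -> (r <= g - 1)%N -> (r <= n)%N -> (fsub W r == fsub V' r)%MS) /\
  (forall r, (g <= r)%N -> (r <= n - 1)%N ->
         ~~ (fsub V' r == fsub W r)%MS /\ (fsub W r <= fsub V' r.+1)%MS).
Proof.
move/forallP => h; split.
  move=> r h1 h2 h3; have := h (inord r); rewrite inordK ?ltnS // h1 h2 /=.
  by case/andP.
move=> r h1 h2; have hr : (r < n.+1)%N by lia.
have := h (inord r); rewrite inordK // h1 h2 /=.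
by case/andP => _ /andP[-> ->].
Qed.

Lemma sg_unique g g' V' : (1 <= g <= n)%N -> (1 <= g' <= n)%N ->
  sg g V' -> sg g' V' -> g = g'.
Proof.
move=> hg hg' /sgP[a1 a2] /sgP[b1 b2].
wlog lt : g g' hg hg' a1 a2 b1 b2 / (g < g')%N.
  move=> hw; case: (ltngtP g g') => // h.
    exact: hw h.
  by apply/esym; apply: hw h.
have [h _] := a2 g (leqnn g) ltac:(lia).
have h2 : (fsub W g == fsub V' g)%MS by apply: b1; lia.
by rewrite andbC h2 in h.
Qed.

End MK.

Section MK2.
Variables (F : finFieldType) (n : nat) (W : flag F n).
Local Notation H := (fsub W n.-1).

Lemma sg_mk g v : (1 <= g <= n)%N -> ~~ (v <= H)%MS -> sg W g (mk W g v).
Proof.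
move=> hg hv; apply/forallP => r; have rn := leq_ord r.
apply/andP; split; apply/implyP => /andP[h1 h2]; rewrite !fsub_mk //; try lia.
  have -> : (r < g)%N by lia.
  by rewrite submx_refl.
have -> : (r < g)%N = false by lia.
have -> : (r.+1 < g)%N = false by lia.
rewrite /= !genmxE addsmxSl andbT negb_and; apply/orP; left.
rewrite addsmx_sub negb_and; apply/orP; right.
apply: contra hv => h; apply: submx_trans h (flag_mono _ _ _); lia.
Qed.

Lemma sg_low g Y : (1 <= g <= n)%N -> sg W g Y ->
  forall k, (k < g)%N -> fsub Y k = fsub W k.
Proof.
move=> hg /sgP[a _] k hk; case: k hk => [|k] hk; first by rewrite !flag_0.
by apply/esym/fsub_eq/a; lia.
Qed.

Lemma sg_struct g Y : (1 <= g <= n)%N -> sg W g Y ->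
  forall k, (g <= k)%N -> (k <= n)%N -> (fsub Y k == fsub W k.-1 + fsub Y g)%MS.
Proof.
move=> hg hs; have [_ a2] := sgP hs.
have hWg : (fsub W g.-1 <= fsub Y g)%MS.
  rewrite -(sg_low hg hs (k := g.-1)); last lia.
  apply: flag_mono; lia.
move=> k0 h1; rewrite -(subnKC h1); elim: (k0 - g)%N => [|d IH] hd.
  by rewrite addn0 addsmxSr addsmx_sub hWg submx_refl.
have hgd : (g + d <= n)%N by lia.
have {}IH := IH hgd.
have [b1 b2] := a2 (g + d)%N (leq_addr _ _) ltac:(lia).
rewrite addnS /=.
set k := (g + d)%N in IH b1 b2 hgd *.
have sA : (fsub W k + fsub Y g <= fsub Y k.+1)%MS.
  by rewrite addsmx_sub b2 flag_mono //; lia.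
have nYk : ~~ (fsub Y k <= fsub W k)%MS.
  apply: contra b1 => h; apply: sub_rank_eq h _; rewrite !flag_rank //; lia.
have sB : (fsub W k + fsub Y k <= fsub W k + fsub Y g)%MS.
  rewrite addsmx_sub addsmxSl (submx_trans (proj1 (andP IH))) //.
  rewrite addsmxS // flag_mono //; lia.
have rB : (k < \rank (fsub W k + fsub Y k)%MS)%N.
  have e : \rank (fsub W k) = k by rewrite flag_rank //; lia.
  have : (\rank (fsub W k) < \rank (fsub W k + fsub Y k)%MS)%N.
    by rewrite (ltn_leqif (mxrank_leqif_sup (addsmxSl _ _))) addsmx_sub submx_refl.
  by rewrite e.
rewrite andbC; apply: sub_rank_eq sA _.
rewrite flag_rank; last lia.
exact: leq_trans rB (mxrankS sB).
Qed.

Lemma sg_char g Y v : (1 <= g <= n)%N -> sg W g Y ->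
  (~~ (v <= H)%MS && (mk W g v == Y)) =
  ((v <= fsub Y g)%MS && ~~ (v <= fsub W g.-1)%MS).
Proof.
move=> hg hs; have gn : (g <= n)%N by lia.
have WH : (fsub W g.-1 <= H)%MS by apply: flag_mono; lia.
apply/andP/andP => [[hv /eqP <-] | [hv1 hv2]].
  rewrite fsub_mk // ltnn genmxE addsmxSr; split=> //.
  by apply: contra hv => h; apply: submx_trans h WH.
have hWg : (fsub W g.-1 <= fsub Y g)%MS.
  by have := sg_struct hg hs (leqnn g) gn => /andP[_]; rewrite addsmx_sub => /andP[].
have eg : (fsub W g.-1 + v == fsub Y g)%MS.
  apply: sub_rank_eq; first by rewrite addsmx_sub hWg hv1.
  rewrite rank_addv // !flag_rank //; lia.
have ek : forall k, (g <= k)%N -> (k <= n)%N -> (fsub Y k == fsub W k.-1 + v)%MS.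
  move=> k h1 h2; have := sg_struct hg hs h1 h2.
  move/andP => [s1 s2]; move/andP: eg => [e1 e2].
  have Wk : (fsub W g.-1 <= fsub W k.-1)%MS.
    by apply: flag_mono; rewrite -!subn1; lia.
  apply/andP; split.
    apply: submx_trans s1 _; rewrite addsmx_sub addsmxSl /=.
    apply: submx_trans e2 _; exact: addsmxS Wk (submx_refl v).
  rewrite addsmx_sub; apply/andP; split; apply: submx_trans s2.
    exact: addsmxSl.
  exact: submx_trans hv1 (addsmxSr _ _).
have hv : ~~ (v <= H)%MS.
  apply/negP => vH; have := ek n gn (leqnn n) => /andP[h _].
  have hYH : (fsub Y n <= H)%MS.
    apply: submx_trans h _; rewrite addsmx_sub vH andbT.
    by rewrite flag_mono // leq_pred.
  have := mxrankS hYH; rewrite !flag_rank ?leq_pred //.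
  have n0 : (0 < n)%N by lia.
  by rewrite -subn1; lia.
split=> //; apply/eqP/val_inj/ffunP => k.
rewrite -!fsubE fsub_mk ?leq_ord //.
case: ifP => hk; first by rewrite (sg_low hg hs hk).
rewrite [RHS]flag_canon; apply/genmxP; rewrite andbC; apply: ek (leq_ord k).
by rewrite leqNgt hk.
Qed.

End MK2.

Section Count.
Variables (F : finFieldType) (n : nat).
Local Notation q := #|F|.

Lemma card_subv m (U : 'M[F]_(m, n)) :
  #|[set v : 'rV[F]_n | (v <= U)%MS]| = (q ^ \rank U)%N.
Proof.
have inj := row_free_inj (row_base_free U).
have -> : [set v : 'rV[F]_n | (v <= U)%MS] =
          [set u *m row_base U | u in [set: 'rV[F]_(\rank U)]].
  apply/setP => v; rewrite !inE; apply/idP/imsetP.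
    by rewrite -(eq_row_base U) => /submxP[u ->]; exists u; rewrite ?inE.
  by case=> u _ ->; rewrite -(eq_row_base U) submxMl.
rewrite card_imset; last by move=> x y; apply: inj.
have -> : #|[set: 'rV[F]_(\rank U)]| = #|{: 'rV[F]_(\rank U)}| by apply: cardsT.
by rewrite card_mx mul1n.
Qed.

Lemma card_diffv m1 m2 (A : 'M[F]_(m1, n)) (B : 'M[F]_(m2, n)) : (A <= B)%MS ->
  #|[set v : 'rV[F]_n | (v <= B)%MS && ~~ (v <= A)%MS]| =
  (q ^ \rank B - q ^ \rank A)%N.
Proof.
move=> sAB; rewrite -!card_subv.
rewrite -(cardsID [set v : 'rV[F]_n | (v <= A)%MS] [set v | (v <= B)%MS]).
have -> : [set v : 'rV[F]_n | (v <= B)%MS] :&: [set v | (v <= A)%MS] =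
          [set v | (v <= A)%MS].
  by apply/setP => v; rewrite !inE andb_idl // => h; apply: submx_trans h sAB.
rewrite addKn; apply: eq_card => v; rewrite !inE andbC.
by [].
Qed.

End Count.

Section Double.
Variables (F : finFieldType) (n : nat) (W : flag F n).
Local Notation q := #|F|.

Lemma double_count g (P : pred (flag F n)) : (1 <= g <= n)%N ->
  #|[set v : 'rV[F]_n | ~~ (v <= fsub W n.-1)%MS && P (mk W g v)]| =
  (#|[set Y | sg W g Y && P Y]| * (q ^ g - q ^ g.-1))%N.
Proof.
move=> hg.
rewrite -!sum1dep_card (partition_big (mk W g) (fun Y => sg W g Y && P Y)) /=;
  last by move=> v /andP[hv hp]; rewrite sg_mk.
rewrite big_distrl /=; apply: eq_bigr => Y /andP[hY hP]; rewrite mul1n.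
have sub : (fsub W g.-1 <= fsub Y g)%MS.
  rewrite -(sg_low hg hY (k := g.-1)); last lia.
  apply: flag_mono; lia.
have := card_diffv sub; rewrite !flag_rank; try lia.
move=> <-; rewrite sum1dep_card; apply: eq_card => v; rewrite !inE.
rewrite -(sg_char _ hg hY); case: eqP => [->|]; rewrite ?hP ?andbT ?andbF //.
Qed.

End Double.

Lemma strict_ext m (f f' : nat -> nat) :
  (forall r, (r <= m)%N -> f r = f' r) -> strict m f <-> strict m f'.
Proof.
move=> e; split=> h r h1 h2; have := h r h1 h2; rewrite !e //; lia.
Qed.

Lemma strict_le m m' f : (m' <= m)%N -> strict m f -> strict m' f.
Proof. by move=> hm h r h1 h2; apply: h; lia. Qed.

Lemma strict_mk_lt (P : nat -> nat) a g m : (m < g)%N ->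
  strict m (fun r => if (r < g)%N then P r else maxn (P r.-1) a) <-> strict m P.
Proof. move=> hm; apply: strict_ext => r hr; have -> : (r < g)%N by lia. by []. Qed.

Lemma strict_mk_ge (P : nat -> nat) a g N m :
  (forall i j, (i <= j)%N -> (j <= N)%N -> (P i <= P j)%N) ->
  P 0 = 0%N -> (0 < a)%N -> (1 <= g)%N -> (g <= m)%N -> (m <= N)%N ->
  strict m (fun r => if (r < g)%N then P r else maxn (P r.-1) a) <->
  [/\ strict m.-1 P, (P g.-1 < a)%N & ((g < m)%N -> (a < P g)%N)].
Proof.
move=> Pmono P0 a0; case: g => // g' _; case: m => // m' hm hmN.
set p' := fun r => _.
have E1 : forall r, (r < g'.+1)%N -> p' r = P r by rewrite /p' => r ->.
have E2 : forall r, (g'.+1 <= r)%N -> p' r = maxn (P r.-1) a.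
  by move=> r hr; rewrite /p' ltnNge hr.
split.
  move=> h; split.
  - move=> r h1 h2 /=; case: (ltnP r.+1 g'.+1) => hr.
      have := h r h1 ltac:(lia); rewrite !E1 //; lia.
    have := h r.+1 ltac:(lia) ltac:(lia); rewrite !E2 //=; lia.
  - case eg : g' => [|g''] /=; first by rewrite P0.
    have := h g' ltac:(lia) ltac:(lia); rewrite E1 // E2; last lia.
    rewrite eg /=; lia.
  - move=> hg; have := h g'.+1 ltac:(lia) ltac:(lia); rewrite !E2 //=; lia.
move=> [hs /= ha hb] r h1 h2.
case: (ltnP r.+1 g'.+1) => hr.
  rewrite E1; last lia. rewrite E1; last lia.
  apply: hs => /=; lia.
case: (ltnP r g'.+1) => hr2.
  have er : r = g' by lia.
  rewrite E1 // E2 //= er; lia.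
rewrite E2; last lia. rewrite E2; last lia.
have hab := hb ltac:(lia).
have hPr : (P g'.+1 <= P r)%N by apply: Pmono; lia.
case: r h1 h2 hr hr2 hPr => [|r'] //= h1 h2 hr hr2 hPr.
case: r' h1 h2 hr hr2 hPr => [|r''] h1 h2 hr hr2 hPr.
  rewrite P0; lia.
have := hs r''.+1 ltac:(lia) ltac:(lia); lia.
Qed.

Section Vec.
Variables (F : finFieldType) (n : nat) (W V : flag F n).
Hypothesis n1 : (1 <= n)%N.
Local Notation q := #|F|.
Local Notation H := (fsub W n.-1).

Definition hcnt k := #|[set v : 'rV[F]_n | ~~ (v <= H)%MS && (v <= fsub V k)%MS]|.

Lemma q_gt1 : (1 < q)%N.
Proof. by rewrite (cardD1 0) (cardD1 1) !inE oner_neq0. Qed.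

Lemma H_rank : \rank H = n.-1.
Proof. by rewrite flag_rank // leq_pred. Qed.

Lemma hcnt_rank k : (k <= n)%N -> (hcnt k + q ^ \rank (fsub V k :&: H)%MS = q ^ k)%N.
Proof.
move=> hk; have := card_diffv (capmxSl (fsub V k) H); rewrite flag_rank //.
have -> : [set v : 'rV[F]_n | (v <= fsub V k)%MS && ~~ (v <= (fsub V k :&: H))%MS]
   = [set v | ~~ (v <= H)%MS && (v <= fsub V k)%MS].
  by apply/setP => v; rewrite !inE sub_capmx; case: (v <= fsub V k)%MS; case: (v <= H)%MS.
rewrite -/(hcnt k) => ->; rewrite subnK // leq_pexp2l ?(ltnW q_gt1) //.
by rewrite -[X in (_ <= X)%N](flag_rank V hk) mxrankS ?capmxSl.
Qed.

Lemma cap_rank k : (k <= n)%N -> ~~ (fsub V k <= H)%MS ->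
  \rank (fsub V k :&: H)%MS = k.-1.
Proof.
move=> hk hn.
have hs : \rank (fsub V k + H)%MS = n.
  apply/eqP; rewrite eqn_leq rank_leq_col /=.
  have : (\rank H < \rank (fsub V k + H)%MS)%N.
    by rewrite (ltn_leqif (mxrank_leqif_sup (addsmxSr _ _))) addsmx_sub submx_refl andbT.
  by rewrite H_rank; lia.
have := mxrank_sum_cap (fsub V k) H; rewrite hs flag_rank // H_rank; lia.
Qed.

Lemma hcnt_sub k : (fsub V k <= H)%MS -> hcnt k = 0%N.
Proof.
move=> h; apply/eqP; rewrite cards_eq0; apply/eqP/setP => v; rewrite !inE.
by apply/negbTE; rewrite negb_and negbK orbC; case: (boolP (v <= fsub V k)%MS) => // hv; rewrite (submx_trans hv h).
Qed.

Lemma hcnt_nsub k : (k <= n)%N -> ~~ (fsub V k <= H)%MS -> hcnt k = (q ^ k - q ^ k.-1)%N.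
Proof. by move=> hk hn; have := hcnt_rank hk; rewrite cap_rank //; lia. Qed.

Lemma hcnt0 : hcnt 0 = 0%N.
Proof. by apply: hcnt_sub; rewrite flag_0 sub0mx. Qed.

Lemma hcntn : hcnt n = (q ^ n - q ^ n.-1)%N.
Proof.
apply: hcnt_nsub => //; apply/negP => h; have := mxrankS h.
rewrite flag_rank // H_rank; lia.
Qed.

Lemma hcnt_step g : (1 <= g)%N -> (g <= n.-1)%N ->
  hcnt (pos V (fsub W g)) = (q * hcnt (pos V (fsub W g)).-1)%N.
Proof.
move=> g1 gn; have gn' : (g <= n)%N by lia.
set k := pos V (fsub W g).
have k1 : (0 < k)%N by apply: pos_ge1.
have kn : (k <= n)%N by apply: pos_le_n.
have [hk|hk] := boolP (fsub V k.-1 <= H)%MS.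
  rewrite (hcnt_sub hk) muln0; apply: hcnt_sub; apply/negPn/negP => hk2.
  have e : (fsub V k.-1 == fsub V k :&: H)%MS.
    apply: sub_rank_eq; first by rewrite sub_capmx hk flag_mono // leq_pred.
    by rewrite cap_rank // flag_rank // -subn1; lia.
  have hWg : (fsub W g <= fsub V k :&: H)%MS.
    rewrite sub_capmx flag_mono ?leq_pred //.
    apply/andP; split => //; exact: (proj1 (proj2 (pos_spec V (fsub W g)))).
  have : (fsub W g <= fsub V k.-1)%MS by apply: submx_trans hWg (proj2 (andP e)).
  rewrite pos_leE -?subn1 -/k; lia.
have hk' : ~~ (fsub V k <= H)%MS.
  by apply: contra hk => h; apply: submx_trans h; apply: flag_mono; rewrite -?subn1; lia.
have k2 : (1 < k)%N.
  by case: k k1 hk {hk' kn} => [|[|k']] //= _; rewrite flag_0 sub0mx.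
rewrite !hcnt_nsub //; last by rewrite -subn1; lia.
case: k k2 {k1 kn hk hk'} => [|[|k']] // _ /=.
by rewrite mulnBr -!expnS.
Qed.

Lemma pos_vec_gt0 (v : 'rV[F]_n) : ~~ (v <= H)%MS -> (0 < pos V v)%N.
Proof.
move=> hv; rewrite lt0n; apply/negP => /eqP h.
have [_ [hs _]] := pos_spec V v; move: hs; rewrite h flag_0 => h0.
by move: hv; rewrite (submx_trans h0) ?sub0mx.
Qed.

Lemma count_interval a b : (a <= b)%N -> (b <= n)%N ->
  (#|[set v : 'rV[F]_n | ~~ (v <= H)%MS && ((a < pos V v) && (pos V v <= b))%N]|
   + hcnt a)%N = hcnt b.
Proof.
move=> ab bn; rewrite /hcnt.
rewrite -(cardsID [set v : 'rV[F]_n | (v <= fsub V a)%MS]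
            [set v | ~~ (v <= H)%MS && (v <= fsub V b)%MS]) addnC.
congr (_ + _)%N; apply: eq_card => v; rewrite !inE.
  rewrite (pos_leE _ _ bn) (pos_leE _ _ (leq_trans ab bn)).
  have hab : (pos V v <= a)%N -> (pos V v <= b)%N := fun h => leq_trans h ab.
  by case: (pos V v <= a)%N hab; case: (pos V v <= b)%N; case: (v <= H)%MS => // /(_ isT).
rewrite (pos_leE _ _ bn) (pos_leE _ _ (leq_trans ab bn)) ltnNge.
by case: (pos V v <= a)%N; case: (pos V v <= b)%N; case: (v <= H)%MS.
Qed.

End Vec.

Definition sb (m : nat) (f : nat -> nat) : bool :=
  [forall r : 'I_m, (1 <= r)%N ==> (f r < f r.+1)%N].

Lemma sbP m f : reflect (strict m f) (sb m f).
Proof.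
apply: (iffP forallP) => h.
  by move=> r h1 h2; have := h (Ordinal h2); rewrite /= h1.
by move=> r; apply/implyP => h1; apply: h.
Qed.

Section Main.
Variables (F : finFieldType) (n : nat) (W V : flag F n) (t : nat).
Hypotheses (hn : (2 <= n)%N) (ht : (1 <= t <= n - 1)%N).
Local Notation q := #|F|.
Local Notation H := (fsub W n.-1).
Local Notation m := (n - t)%N.
Local Notation Pw := (fun r => pos V (fsub W r)).

Lemma n1 : (1 <= n)%N. Proof. lia. Qed.

Lemma Pw_mono i j : (i <= j)%N -> (j <= n)%N -> (Pw i <= Pw j)%N.
Proof.
move=> ij jn /=; rewrite -pos_leE ?pos_le_n //.
apply: submx_trans (flag_mono _ ij jn) _.
exact: (proj1 (proj2 (pos_spec V (fsub W j)))).
Qed.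

Lemma Pw0 : Pw 0 = 0%N.
Proof.
apply/eqP; rewrite /= -leqn0 -pos_leE // !flag_0; exact: sub0mx.
Qed.

Lemma Xb_mk g v : (1 <= g <= n)%N -> ~~ (v <= H)%MS ->
  Xb t (mk W g v) V <->
  strict m (fun r => if (r < g)%N then Pw r else maxn (Pw r.-1) (pos V v)).
Proof.
move=> hg hv; rewrite Xb_pos; last lia.
apply: strict_ext => r hr; rewrite fsub_mk //; last lia.
by case: ifP => // _; rewrite pos_gen pos_adds.
Qed.

Definition dcnt g := #|[set v : 'rV[F]_n | ~~ (v <= H)%MS && Xb t (mk W g v) V]|.
Definition ccnt g := #|[set Y : flag F n | sg W g Y && Xb t Y V]|.

Lemma cd g : (1 <= g <= n)%N -> (ccnt g * (q ^ g - q ^ g.-1))%N = dcnt g.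
Proof. by move=> hg; rewrite /dcnt (double_count W (fun Y => Xb t Y V)). Qed.

Lemma notH_card : #|[set v : 'rV[F]_n | ~~ (v <= H)%MS]| = (q ^ n - q ^ n.-1)%N.
Proof.
rewrite -(hcntn W V n1); apply: eq_card => v; rewrite !inE.
by rewrite (submx_trans (submx1 v) (flag_full V)) andbT.
Qed.

Lemma dcnt_big g : (m < g)%N -> (g <= n)%N ->
  dcnt g = if sb m Pw then (q ^ n - q ^ n.-1)%N else 0%N.
Proof.
move=> hm hg; rewrite /dcnt -notH_card.
have hg' : (1 <= g <= n)%N by lia.
case: sbP => hs.
  apply: eq_card => v; rewrite !inE; case hv: (v <= H)%MS => //=.
  apply: (proj2 (Xb_mk hg' (negbT hv))); exact: (proj2 (strict_mk_lt _ _ hm) hs).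
apply/eqP; rewrite cards_eq0; apply/eqP/setP => v; rewrite !inE.
case hv: (v <= H)%MS => //=; apply/negbTE/negP => h0.
have h := proj1 (Xb_mk hg' (negbT hv)) h0.
by apply: hs; exact: (proj1 (strict_mk_lt _ _ hm) h).
Qed.

Definition bnd g := if (g < m)%N then (Pw g).-1 else n.

Lemma dcnt_small g : (1 <= g <= m)%N -> strict m.-1 Pw ->
  (dcnt g + hcnt W V (Pw g.-1) = hcnt W V (bnd g))%N.
Proof.
move=> hg hs.
have hg' : (1 <= g <= n)%N by lia.
have Pg1 : (0 < Pw g)%N by apply: pos_ge1; lia.
have ab : (Pw g.-1 <= bnd g)%N.
  rewrite /bnd; case: ifP => hgm; last exact: pos_le_n.
  case eg : g hg hgm => [|g'] //= hg hgm.
  case: g' eg hg hgm => [|g''] eg hg hgm.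
    by have := Pw0; move=> /= ->.
  have h := hs g''.+1 isT; have := h ltac:(rewrite -subn1; lia).
  rewrite -subn1; lia.
have bn : (bnd g <= n)%N.
  rewrite /bnd; case: ifP => // _; have := pos_le_n V (fsub W g); lia.
rewrite -(count_interval W V ab bn); congr (_ + _)%N.
apply: eq_card => v; rewrite !inE; case hv: (v <= H)%MS => //=.
have a0 := pos_vec_gt0 V (negbT hv).
have SM := @strict_mk_ge (fun r => pos V (fsub W r)) (pos V v) g n m
  Pw_mono Pw0 a0 ltac:(lia) ltac:(lia) ltac:(lia).
have XM := Xb_mk hg' (negbT hv).
apply/idP/andP => [h | [h1 h2]].
  have [_ ha hb] := proj1 SM (proj1 XM h); split => //.
  rewrite /bnd; case: ifP => hgm; last exact: pos_le_n.
  have := hb hgm; lia.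
apply: (proj2 XM); apply: (proj2 SM); split => // hgm.
move: h2; rewrite /bnd hgm; lia.
Qed.

Lemma dcnt_small0 g : (1 <= g <= m)%N -> ~ strict m.-1 Pw -> dcnt g = 0%N.
Proof.
move=> hg hs; have hg' : (1 <= g <= n)%N by lia.
apply/eqP; rewrite cards_eq0; apply/eqP/setP => v; rewrite !inE.
case hv: (v <= H)%MS => //=; apply/negbTE/negP => h0.
have a0 := pos_vec_gt0 V (negbT hv).
have SM := @strict_mk_ge (fun r => pos V (fsub W r)) (pos V v) g n m
  Pw_mono Pw0 a0 ltac:(lia) ltac:(lia) ltac:(lia).
have [h _ _] := proj1 SM (proj1 (Xb_mk hg' (negbT hv)) h0).
exact: hs h.
Qed.

Lemma Dstep j : (q ^ j.+2 - q ^ j.+1 = q * (q ^ j.+1 - q ^ j))%N.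
Proof. by rewrite mulnBr -!expnS. Qed.

Lemma tele j : strict m.-1 Pw -> (j <= m.-1)%N ->
  ((\sum_(1 <= g < j.+1) ccnt g) * (q ^ j.+1 - q ^ j) = hcnt W V (Pw j))%N.
Proof.
move=> hs; elim: j => [|j IH] hj.
  by rewrite big_geq // mul0n Pw0 hcnt0.
have hj' : (j <= m.-1)%N by lia.
rewrite big_nat_recr //= mulnDl Dstep mulnCA IH //.
have e := cd (g := j.+1) ltac:(lia); rewrite /= in e.
have e2 := dcnt_small (g := j.+1) ltac:(lia) hs.
rewrite /= /bnd in e2; move: e2.
have -> : (j.+1 < m)%N by move: hj; rewrite -subn1; lia.
move=> e2.
rewrite (hcnt_step W V n1 (g := j.+1)) //; last by move: hj; rewrite -subn1; lia.
rewrite -e2 mulnCA e mulnDr; lia.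
Qed.

Lemma tele_final : strict m.-1 Pw ->
  (\sum_(1 <= g < m.+1) ccnt g = q ^ t)%N.
Proof.
move=> hs.
have m1 : (1 <= m)%N by lia.
have D0 : (0 < q ^ m - q ^ m.-1)%N.
  rewrite subn_gt0 ltn_exp2l ?q_gt1 //; lia.
apply/eqP; rewrite -(eqn_pmul2r D0); apply/eqP.
rewrite big_nat_recr //=.
have := tele (j := m.-1) hs (leqnn _); rewrite prednK // => T.
rewrite mulnDl T cd; last lia.
have := dcnt_small (g := m) ltac:(lia) hs; rewrite /bnd ltnn addnC => ->.
rewrite hcntn; last lia.
have e1 : (t + m = n)%N by lia.
have e2 : (t + m.-1 = n.-1)%N by rewrite -!subn1; lia.
by rewrite mulnBr -!expnD e1 e2.
Qed.

Lemma ccnt_big g : (m < g)%N -> (g <= n)%N ->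
  ccnt g = if sb m Pw then (q ^ (n - g))%N else 0%N.
Proof.
move=> hm hg.
have D0 : (0 < q ^ g - q ^ g.-1)%N.
  rewrite subn_gt0 ltn_exp2l ?q_gt1 //; lia.
apply/eqP; rewrite -(eqn_pmul2r D0); apply/eqP.
rewrite cd; last lia.
rewrite dcnt_big //; case: sb; last by rewrite mul0n.
have e1 : (n - g + g = n)%N by lia.
have e2 : (n - g + g.-1 = n.-1)%N by rewrite -!subn1; lia.
by rewrite mulnBr -!expnD e1 e2.
Qed.

Lemma ccnt_small0 g : (1 <= g <= m)%N -> ~ strict m.-1 Pw -> ccnt g = 0%N.
Proof.
move=> hg hs.
have D0 : (0 < q ^ g - q ^ g.-1)%N.
  rewrite subn_gt0 ltn_exp2l ?q_gt1 //; lia.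
apply/eqP; rewrite -(eqn_pmul2r D0); apply/eqP.
by rewrite cd ?dcnt_small0 //; lia.
Qed.

End Main.

Section Final.
Variables (F : finFieldType) (n : nat) (W V : flag F n) (t : nat).
Hypotheses (hn : (2 <= n)%N) (ht : (1 <= t <= n - 1)%N).
Local Notation q := #|F|.
Local Notation m := (n - t)%N.
Local Notation Pw := (fun r => pos V (fsub W r)).

Lemma ord_sum (G : nat -> nat) :
  (\sum_(g < n.+1 | (1 <= g)%N) G g = \sum_(1 <= g < n.+1) G g)%N.
Proof.
rewrite -(big_mkord (fun g => 1 <= g)%N) big_ltn_cond //= big_nat_cond.
rewrite [RHS]big_nat_cond; apply: eq_bigl => i; rewrite ssrbool.andbT.
by rewrite andb_idr // => /andP[].
Qed.

Lemma total_eq :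
  (\sum_(Y | f1b W Y && Xb t Y V) 1 = \sum_(1 <= g < n.+1) ccnt W V t g)%N.
Proof.
rewrite -ord_sum.
transitivity (\sum_(g < n.+1 | (1 <= g)%N) \sum_(Y | sg W g Y && Xb t Y V) 1)%N;
  last by apply: eq_bigr => g _; rewrite sum1dep_card.
rewrite (exchange_big_dep xpredT) //= big_mkcond /=.
apply: eq_bigr => Y _; rewrite sum1dep_card f1bE.
case: (boolP (Xb t Y V)) => hx; last first.
  rewrite ssrbool.andbF; apply/esym/eqP; rewrite cards_eq0; apply/eqP/setP => g.
  by rewrite !inE !ssrbool.andbF.
rewrite !ssrbool.andbT.
case: (boolP [exists g : 'I_n.+1, (1 <= g)%N && sg W g Y]) => [/existsP[g0 /andP[g01 hg0]]|hne].
  rewrite (_ : [set _ | _] = [set g0]) ?cards1 //; apply/setP => g; rewrite !inE ssrbool.andbT.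
  apply/andP/eqP => [[g1 hg]|->]; last by split.
  apply: val_inj => /=; apply: (sg_unique _ _ hg hg0).
    by rewrite g1 -ltnS ltn_ord.
  by rewrite g01 -ltnS ltn_ord.
apply/esym/eqP; rewrite cards_eq0; apply/eqP/setP => g; rewrite !inE ssrbool.andbT.
apply/negbTE; apply: contra hne => /andP[g1 hg]; apply/existsP; exists g.
by rewrite g1.
Qed.

Lemma reindex_pow :
  (\sum_(m.+1 <= g < n.+1) q ^ (n - g) = \sum_(k < t) q ^ k)%N.
Proof.
rewrite -{1}[m.+1]add0n big_addn.
have -> : (n.+1 - m.+1 = t)%N by lia.
rewrite big_nat_rev -(big_mkord xpredT) /=.
apply: eq_big_nat => i /andP[_ hi]; congr (_ ^ _)%N; lia.
Qed.

Lemma count_main :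
  (\sum_(1 <= g < n.+1) ccnt W V t g =
   (if sb m.-1 Pw then q ^ t else 0) + (if sb m Pw then \sum_(k < t) q ^ k else 0))%N.
Proof.
rewrite (@big_cat_nat _ _ _ m.+1) //=; try lia.
congr (_ + _)%N.
  case: sbP => hs; first exact: tele_final.
  rewrite big_nat_cond big1 // => g /andP[/andP[h1 h2] _].
  by apply: ccnt_small0 => //; lia.
rewrite (@eq_big_nat _ _ _ _ _ _ (fun g => if sb m Pw then q ^ (n - g) else 0)%N).
  case: sb; first exact: reindex_pow.
  by rewrite big1.
move=> g /andP[h1 h2]; apply: ccnt_big => //; lia.
Qed.

End Final.
Theorem lemma3 (F : finFieldType) (n : nat) (hn : (2 <= n)%N) (t : nat)
  (ht : (1 <= t <= n - 1)%N) (W V : flag F n) :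
  hconv (@f1 F n) (@ft F n t) W V =
    (\sum_(k < t) (#|F|%:R : algC) ^+ k) * ft t W V
    + (#|F|%:R : algC) ^+ t * ft t.+1 W V.
Proof.
rewrite /hconv /f1 /ft /ind.
transitivity ((\sum_(Y | f1b W Y && Xb t Y V) 1)%N%:R : algC).
  rewrite natr_sum [RHS]big_mkcond /=.
  apply: eq_bigr => Y _.
  by case: (f1b W Y); case: (Xb t Y V); rewrite /= ?mulr1 ?mulr0 ?mul0r.
rewrite total_eq // count_main //.
have E1 : Xb t W V = sb (n - t) (fun r => pos V (fsub W r)).
  by apply/idP/sbP => /(Xb_pos W V (ltac:(lia) : (t <= n)%N)).
have E2 : Xb t.+1 W V = sb (n - t).-1 (fun r => pos V (fsub W r)).
  by rewrite -subnS; apply/idP/sbP => /(Xb_pos W V (ltac:(lia) : (t.+1 <= n)%N)).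
rewrite E1 E2.
have S : (n - t <= (n - t).-1)%N = false by lia.
case: (boolP (sb (n - t) _)) => h1; case: (boolP (sb (n - t).-1 _)) => h2.
- by rewrite natrD natr_sum natrX mulr1 mulr1 addrC; congr (_ + _); apply: eq_bigr => k _; rewrite natrX.
- exfalso; move/sbP: h1 => h1; move/negP: h2; apply; apply/sbP.
  by apply: strict_le h1; lia.
- by rewrite addn0 natrX mulr0 mulr1 add0r.
- by rewrite addn0 mulr0 mulr0 addr0.
Qed.
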